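(* Fix $n\ge 2$ and a dictator agent $t\in\{1,\dots,n\}$. Let $f$ be the mechanism that on a profile $\mathbf{x}=(x_1,\dots,x_n)$ sets $l_1=x_t$, $d_A=\max_{j:\,x_j\le x_t}(x_t-x_j)$, $d_B=\max_{j:\,x_j\ge x_t}(x_j-x_t)$, and $l_2=l_1+\max\{2d_A,d_B\}$ if $d_A\le d_B$, and $l_2=l_1-\max\{d_A,2d_B\}$ otherwise; it outputs $\{l_1,l_2\}$. Then for every profile $\mathbf{x}\in\mathbb{R}^n$, $SC(f,\mathbf{x})\le(n-1)\,OPT(\mathbf{x})$.
   Context: Two-facility game on a line: agent $j$ has location $x_j\in\mathbb{R}$. For facility locations $\{l_1,l_2\}$, an agent at $y$ has cost $\min\{|l_1-y|,|l_2-y|\}$. $SC(f,\mathbf{x})$ is the sum over all agents of their costs under $f(\mathbf{x})$, and $OPT(\mathbf{x})=\min_{l_1,l_2\in\mathbb{R}}\sum_j\min\{|l_1-x_j|,|l_2-x_j|\}$. *)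

(* Defs.v *)
From HB Require Import structures.
From mathcomp Require Import all_boot all_order all_algebra.
From mathcomp Require Import classical_sets reals.
Set Implicit Arguments. Unset Strict Implicit. Unset Printing Implicit Defensive.
Import Order.TTheory GRing.Theory Num.Theory.
Local Open Scope ring_scope.
Local Open Scope classical_set_scope.

Definition agent_cost (R : realType) (l : R * R) (y : R) : R :=
  Num.min `|l.1 - y| `|l.2 - y|.

Definition cost (R : realType) (n : nat) (l : R * R) (x : 'I_n -> R) : R :=
  \sum_(j < n) agent_cost l (x j).

(* OPT(x) = inf over all l1 l2 of the social cost (the min is attained) *)
Definition OPT (R : realType) (n : nat) (x : 'I_n -> R) : R :=
  inf [set c | exists l : R * R, c = cost l x].

Definition dA (R : realType) (n : nat) (t : 'I_n) (x : 'I_n -> R) : R :=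
  \big[Num.max/0]_(j < n | x j <= x t) (x t - x j).
Definition dB (R : realType) (n : nat) (t : 'I_n) (x : 'I_n -> R) : R :=
  \big[Num.max/0]_(j < n | x t <= x j) (x j - x t).

Definition mech (R : realType) (n : nat) (t : 'I_n) (x : 'I_n -> R) : R * R :=
  let l1 := x t in
  let a := dA t x in
  let b := dB t x in
  (l1, if a <= b then l1 + Num.max (2 * a) b else l1 - Num.max a (2 * b)).

Definition SC (R : realType) (n : nat) (t : 'I_n) (x : 'I_n -> R) : R :=
  cost (mech t x) x.

(* Main.v *)
Require Import Defs.
From HB Require Import structures.
From mathcomp Require Import all_boot all_order all_algebra.
From mathcomp Require Import classical_sets reals.
From mathcomp Require Import lra.
Import Order.TTheory GRing.Theory Num.Theory.
Local Open Scope ring_scope.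

Section S.
Variable R : realType.

Lemma ac_tri (l : R * R) (p q r m : R) : m <= `|p - q| -> m <= `|q - r| -> m <= `|p - r| ->
  m <= agent_cost l p + agent_cost l q + agent_cost l r.
Proof.
have hd : forall c u v : R, `|u - v| <= `|c - u| + `|c - v|.
  by move=> c u v; rewrite (le_trans (ler_distD c u v)) // (distrC u c).
move=> h1 h2 h3; rewrite /agent_cost !minEle.
have := hd l.1 p q; have := hd l.1 q r; have := hd l.1 p r.
have := hd l.2 p q; have := hd l.2 q r; have := hd l.2 p r.
have := normr_ge0 (l.1 - p); have := normr_ge0 (l.1 - q); have := normr_ge0 (l.1 - r).
have := normr_ge0 (l.2 - p); have := normr_ge0 (l.2 - q); have := normr_ge0 (l.2 - r).
by do 3 case: ifP => _; move=> *; lra.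
Qed.

Lemma cost_ge0 n (l : R * R) (x : 'I_n -> R) : 0 <= cost l x.
Proof. by apply: sumr_ge0 => i _; rewrite /agent_cost le_min !normr_ge0. Qed.

Lemma opt_lb n (x : 'I_n -> R) m : (forall l, m <= cost l x) -> m <= OPT x.
Proof.
move=> H; apply: lb_le_inf; first by exists (cost (0,0) x); exists (0,0).
by move=> c [l ->].
Qed.

Lemma opt_tri n (x : 'I_n -> R) p q r m :
  m <= `|x p - x q| -> m <= `|x q - x r| -> m <= `|x p - x r| -> m <= OPT x.
Proof.
move=> h1 h2 h3.
case: (leP m 0) => hm.
  by apply: opt_lb => l; have := cost_ge0 _ l x; lra.
have dst : forall i j, 0 < `|x i - x j| -> i != j.
  by move=> i j; apply: contraTN => /eqP ->; rewrite subrr normr0 ltxx.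
have pq := dst _ _ (lt_le_trans hm h1).
have qr := dst _ _ (lt_le_trans hm h2).
have pr := dst _ _ (lt_le_trans hm h3).
apply: opt_lb => l; have := @ac_tri l _ _ _ _ h1 h2 h3.
suff : agent_cost l (x p) + agent_cost l (x q) + agent_cost l (x r) <= cost l x by lra.
rewrite /cost (bigD1 p) //= (bigD1 q) /=; last by rewrite eq_sym pq.
rewrite (bigD1 r) /=; last by rewrite (eq_sym r p) pr (eq_sym r q) qr.
rewrite !addrA lerDl; apply: sumr_ge0 => i _.
by rewrite /agent_cost le_min !normr_ge0.
Qed.

Lemma core (c y a b L2 O : R) (P : R -> Prop)
  (Htri : forall u v w m, P u -> P v -> P w ->
     m <= `|u - v| -> m <= `|v - w| -> m <= `|u - w| -> m <= O) :
  0 <= a -> a <= b -> c - a <= y -> y <= c + b ->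
  P y -> P c -> P (c - a) -> P (c + b) -> L2 = c + Num.max (2 * a) b ->
  Num.min `|c - y| `|L2 - y| <= O.
Proof.
move=> a0 ab ly yr Py Pc Pl Pr ->.
have nl : forall z : R, z <= `|z| by move=> z; apply: ler_norm.
have nr : forall z : R, - z <= `|z| by move=> z; rewrite -normrN; apply: ler_norm.
have up : forall z w : R, - w <= z -> z <= w -> `|z| <= w.
  by move=> z w h1 h2; rewrite ler_norml h1 h2.
case: (leP y c) => hyc.
  rewrite ge_min; apply/orP; left.
  apply: le_trans (up _ (c - y) _ _) _; [lra|lra|].
  apply: (Htri y c (c + b)) => //.
  - by have := nl (y - c); have := nr (y - c); lra.
  - by have := nl (c - (c + b)); have := nr (c - (c + b)); lra.
  - by have := nl (y - (c + b)); have := nr (y - (c + b)); lra.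
case: (leP (2 * a) b) => h2a.
  case: (leP (y - c) (c + b - y)) => hh.
    rewrite ge_min; apply/orP; left.
    apply: le_trans (up _ (y - c) _ _) _; [lra|lra|].
    apply: (Htri c y (c + b)) => //.
    - by have := nl (c - y); have := nr (c - y); lra.
    - by have := nl (y - (c + b)); have := nr (y - (c + b)); lra.
    - by have := nl (c - (c + b)); have := nr (c - (c + b)); lra.
  rewrite ge_min; apply/orP; right.
  apply: le_trans (up _ (c + b - y) _ _) _; [lra|lra|].
  apply: (Htri c y (c + b)) => //.
  - by have := nl (c - y); have := nr (c - y); lra.
  - by have := nl (y - (c + b)); have := nr (y - (c + b)); lra.
  - by have := nl (c - (c + b)); have := nr (c - (c + b)); lra.
case: (leP (y - c) a) => hh.
  rewrite ge_min; apply/orP; left.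
  apply: le_trans (up _ (y - c) _ _) _; [lra|lra|].
  apply: (Htri (c - a) c y) => //.
  - by have := nl (c - a - c); have := nr (c - a - c); lra.
  - by have := nl (c - y); have := nr (c - y); lra.
  - by have := nl (c - a - y); have := nr (c - a - y); lra.
rewrite ge_min; apply/orP; right.
apply: le_trans (up _ a _ _) _; [lra|lra|].
apply: (Htri (c - a) c y) => //.
- by have := nl (c - a - c); have := nr (c - a - c); lra.
- by have := nl (c - y); have := nr (c - y); lra.
- by have := nl (c - a - y); have := nr (c - a - y); lra.
Qed.
End S.

Lemma oppdist (R : realType) (u v : R) : `|- u - - v| = `|u - v|.
Proof. by rewrite -normrN opprD !opprK. Qed.

Theorem mainTheorem9 (R : realType) (n : nat) (hn : (2 <= n)%N) (t : 'I_n)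
  (x : 'I_n -> R) :
  SC t x <= (n - 1)%:R * OPT x.
Proof.
pose a := dA t x; pose b := dB t x.
have a0 : 0 <= a by apply: bigmax_ge_id.
have b0 : 0 <= b by apply: bigmax_ge_id.
have aL : forall j, x t - a <= x j.
  move=> j; case: (leP (x j) (x t)) => h; last lra.
  have := @le_bigmax_cond _ R _ 0 j (fun i => x i <= x t) (fun i => x t - x i) h.
  rewrite -/(dA t x) -/a; lra.
have bR : forall j, x j <= x t + b.
  move=> j; case: (leP (x t) (x j)) => h; last lra.
  have := @le_bigmax_cond _ R _ 0 j (fun i => x t <= x i) (fun i => x i - x t) h.
  rewrite -/(dB t x) -/b; lra.
have [jl _ hl] : {i0 | i0 \in (fun i => x i <= x t) & a = x t - x i0}.
  apply: (eq_bigmax t); first by rewrite /= lexx.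
  by move=> i /= h; lra.
have [jr _ hr] : {i0 | i0 \in (fun i => x t <= x i) & b = x i0 - x t}.
  apply: (eq_bigmax t); first by rewrite /= lexx.
  by move=> i /= h; lra.
have each : forall j, agent_cost (mech t x) (x j) <= OPT x.
  move=> j; rewrite /mech /agent_cost /= -/(dA t x) -/(dB t x) -/a -/b.
  case: ifP => hab.
    apply: (@core R (x t) (x j) a b _ _ (fun u => exists k, x k = u)) => //.
    - by move=> u v w m [p <-] [q <-] [r <-]; apply: opt_tri.
    - by exists j.
    - by exists t.
    - by exists jl; lra.
    - by exists jr; lra.
  have hba : b <= a by move/negbT: hab; rewrite -ltNge => /ltW.
  have := @core R (- x t) (- x j) b a (- (x t - Num.max a (2 * b))) (OPT x)
     (fun u => exists k, x k = - u).
  rewrite !oppdist; apply => //.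
  - move=> u v w m [p hp] [q hq] [r hr'].
    have -> : u = - x p by rewrite hp opprK.
    have -> : v = - x q by rewrite hq opprK.
    have -> : w = - x r by rewrite hr' opprK.
    rewrite !oppdist; apply: opt_tri.
  - by have := aL j; have := bR j; lra.
  - by have := aL j; have := bR j; lra.
  - by exists j; rewrite opprK.
  - by exists t; rewrite opprK.
  - by exists jr; lra.
  - by exists jl; lra.
  - by rewrite opprB addrC maxC.
rewrite /SC /cost (bigD1 t) //=.
have -> : agent_cost (mech t x) (x t) = 0.
  apply/eqP; rewrite eq_le; apply/andP; split.
    by rewrite /agent_cost ge_min subrr normr0 lexx.
  by rewrite /agent_cost le_min !normr_ge0.
rewrite add0r.
apply: le_trans (ler_sum _ (fun j _ => each j)) _.
rewrite sumr_const cardC1 card_ord mulr_natl.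
by case: n hn t x {a b a0 b0 aL bR jl hl jr hr each} => [|[|n']] //.
Qed.
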